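(* Let $e_1,\dots,e_k\in\mathbb{C}^{n\times n}$ be an anticommuting family and let $p\le k$. Assume that for every $A\subseteq[k]$ with $|A|\le p$ we have $\prod_{i\in A}e_i^2\neq 0$. Then the matrices $e_A$ with $A\subseteq[k]$, $|A|\le p$ and $|A|$ even are linearly independent; likewise the matrices $e_A$ with $A\subseteq [k]$, $|A|\le p$ and $|A|$ odd are linearly independent.
   Context: A family $e_1,\dots,e_k$ of complex $n\times n$ matrices is called anticommuting if $e_ie_j=-e_je_i$ for all distinct $i,j\in[k]=\{1,\dots,k\}$. For $A=\{i_1,\dots,i_r\}\subseteq[k]$ with $i_1<\dots<i_r$, $e_A:=e_{i_1}e_{i_2}\cdots e_{i_r}$, and $e_\emptyset=I_n$. (The matrices $e_i^2$ commute with each other, so $\prod_{i\in A}e_i^2$ does not depend on the order; the empty product is $I_n$.) *)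

(* Defs.v *)
From HB Require Import structures.
From mathcomp Require Import all_boot all_order all_algebra.
Set Implicit Arguments. Unset Strict Implicit. Unset Printing Implicit Defensive.
Import Order.TTheory GRing.Theory Num.Theory.
Local Open Scope ring_scope.

Definition anticommuting (C : numClosedFieldType) (n k : nat)
  (e : 'I_k -> 'M[C]_n) : Prop :=
  forall i j : 'I_k, i != j -> e i *m e j = - (e j *m e i).

(* e_A = e_{i_1} ... e_{i_r} with i_1 < ... < i_r (enum A is increasing);
   e_emptyset = identity. *)
Definition eA (C : numClosedFieldType) (n k : nat)
  (e : 'I_k -> 'M[C]_n) (A : {set 'I_k}) : 'M[C]_n :=
  foldr (fun i M => e i *m M) 1%:M (enum A).

(* prod_{i in A} e_i^2 (the e_i^2 commute, order irrelevant; empty = I). *)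
Definition sqprod (C : numClosedFieldType) (n k : nat)
  (e : 'I_k -> 'M[C]_n) (A : {set 'I_k}) : 'M[C]_n :=
  foldr (fun i M => (e i *m e i) *m M) 1%:M (enum A).

(* Main.v *)
Require Import Defs.
From HB Require Import structures.
From mathcomp Require Import all_boot all_order all_algebra.
From mathcomp Require Import zify.
Import Order.TTheory GRing.Theory Num.Theory.
Set Implicit Arguments. Unset Strict Implicit. Unset Printing Implicit Defensive.
Local Open Scope ring_scope.

Definition Gm (C : numClosedFieldType) (n k : nat) (e : 'I_k -> 'M[C]_n)
  (B : {set 'I_k}) (l : seq 'I_k) : 'M[C]_n :=
  foldr (fun j M => (if j \in B then e j *m e j else e j) *m M) 1%:M l.

Definition cnt (k : nat) (B : {set 'I_k}) (l : seq 'I_k) : nat :=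
  count (fun j => j \notin B) l.

Definition Dop (C : numClosedFieldType) (n k : nat) (e : 'I_k -> 'M[C]_n)
  (i : 'I_k) (b : bool) (X : 'M[C]_n) : 'M[C]_n :=
  e i *m X - (-1) ^+ b *: (X *m e i).

Lemma Gm_cat (C : numClosedFieldType) (n k : nat) (e : 'I_k -> 'M[C]_n) (B : {set 'I_k}) l1 l2 :
  Gm e B (l1 ++ l2) = Gm e B l1 *m Gm e B l2.
Proof. elim: l1 => [|j l IH] /=; first by rewrite mul1mx. by rewrite IH mulmxA. Qed.

Lemma Gm_eq (C : numClosedFieldType) (n k : nat) (e : 'I_k -> 'M[C]_n) (B B' : {set 'I_k}) (l : seq 'I_k) :
  {in l, forall j, (j \in B) = (j \in B')} -> Gm e B l = Gm e B' l.
Proof.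
elim: l => [|j l IH] //= H.
rewrite H ?mem_head // IH // => x xl; apply: H; by rewrite in_cons xl orbT.
Qed.

Lemma Gm_comm (C : numClosedFieldType) (n k : nat) (e : 'I_k -> 'M[C]_n) (B : {set 'I_k}) (l : seq 'I_k) (i : 'I_k) :
  anticommuting e -> i \notin l ->
  e i *m Gm e B l = (-1) ^+ (cnt B l) *: (Gm e B l *m e i).
Proof.
move=> hae; elim: l => [|j l IH] /=; first by rewrite mul1mx mulmx1 expr0 scale1r.
rewrite in_cons negb_or => /andP[ij il].
have ea : e i *m e j = - (e j *m e i) := hae i j ij.
rewrite mulmxA; case: (j \in B) => /=.
- have -> : e i *m (e j *m e j) = e j *m e j *m e i.
    by rewrite mulmxA ea mulNmx -(mulmxA (e j) (e i) (e j)) ea mulmxN opprK mulmxA.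
  by rewrite add0n -(mulmxA (e j *m e j)) (IH il) -scalemxAr !mulmxA.
- by rewrite ea add1n exprS mulNmx -(mulmxA (e j) (e i)) (IH il) -scalemxAr mulN1r scaleNr mulmxA.

Qed.

Lemma sign_sq (C : numClosedFieldType) (m : nat) : (-1) ^+ m * (-1) ^+ m = 1 :> C.
Proof. by rewrite -signr_odd -signr_addb addbb expr0. Qed.

Lemma D_notin (C : numClosedFieldType) (n k : nat) (e : 'I_k -> 'M[C]_n)
  (B : {set 'I_k}) (l : seq 'I_k) (i : 'I_k) :
  anticommuting e -> i \notin l -> Dop e i (odd (cnt B l)) (Gm e B l) = 0.
Proof. by move=> hae il; rewrite /Dop (Gm_comm _ hae il) signr_odd subrr. Qed.

Lemma D_in (C : numClosedFieldType) (n k : nat) (e : 'I_k -> 'M[C]_n)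
  (B : {set 'I_k}) (l : seq 'I_k) (i : 'I_k) :
  anticommuting e -> uniq l -> i \in l -> i \notin B ->
  Dop e i (odd (cnt B l)) (Gm e B l)
  = (2 * (-1) ^+ cnt B (take (index i l) l)) *: Gm e (i |: B) l.
Proof.
move=> hae ul il iB; case/splitPr: il ul => l1 l2.
rewrite cat_uniq /= => /and3P[u1 /norP[i1 _] /andP[i2 u2]].
rewrite index_cat (negPf i1) /= eqxx addn0 take_size_cat //.
have E : forall l', i \notin l' -> Gm e (i |: B) l' = Gm e B l'.
  move=> l' il'; apply: Gm_eq => j jl; rewrite in_setU1.
  case: (eqVneq j i) => [ji|//]; by move: il'; rewrite -ji jl.
rewrite !Gm_cat /= (negPf iB) setU11 !E //.
rewrite /cnt count_cat /= iB /=.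
set G1 := Gm e B l1; set G2 := Gm e B l2.
set M := G1 *m (e i *m e i *m G2).
have L : e i *m (G1 *m (e i *m G2)) = (-1) ^+ cnt B l1 *: M.
  by rewrite mulmxA (Gm_comm _ hae i1) -scalemxAl /M !mulmxA.
have C2 : G2 *m e i = (-1) ^+ cnt B l2 *: (e i *m G2).
  by rewrite (Gm_comm _ hae i2) scalerA sign_sq scale1r.
have R : G1 *m (e i *m G2) *m e i = (-1) ^+ cnt B l2 *: M.
  by rewrite -!mulmxA C2 -!scalemxAr /M !mulmxA.
rewrite /Dop L R scalerA -scalerBl; congr (_ *: _).
rewrite signr_odd !exprD expr1 /cnt.
set s1 := (-1) ^+ count _ l1; set s2 := (-1) ^+ count _ l2.
have -> : s1 * (-1 * s2) * s2 = - s1 by rewrite mulN1r mulrN mulNr -mulrA sign_sq mulr1.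
by rewrite opprK mulr2n mulrDl mul1r.
Qed.

Lemma cnt_enum (k : nat) (B A : {set 'I_k}) :
  B \subset A -> cnt B (enum A) = (#|A| - #|B|)%N.
Proof.
move=> BA; have := count_predC (mem B) (enum A).
have -> : count (mem B) (enum A) = #|B|.
  rewrite -size_filter; have /card_uniqP <- := filter_uniq (mem B) (enum_uniq (mem A)).
  apply: eq_card => j; rewrite mem_filter mem_enum /=.
  by case jB: (j \in B); rewrite // (subsetP BA _ jB).
rewrite -cardE => <-; rewrite /cnt addKn //.
Qed.

Lemma Dop_lin (C : numClosedFieldType) (n k : nat) (e : 'I_k -> 'M[C]_n) i b
  (Q : pred {set 'I_k}) (a : {set 'I_k} -> C) (X : {set 'I_k} -> 'M[C]_n) :
  Dop e i b (\sum_(A | Q A) a A *: X A) = \sum_(A | Q A) a A *: Dop e i b (X A).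
Proof.
rewrite /Dop mulmx_sumr mulmx_suml scaler_sumr -sumrB; apply: eq_bigr => A _.
by rewrite scalerBr -scalemxAr -scalemxAl !scalerA mulrC.
Qed.

Lemma Dop0 (C : numClosedFieldType) (n k : nat) (e : 'I_k -> 'M[C]_n) i b :
  Dop e i b 0 = 0.
Proof. by rewrite /Dop mulmx0 mul0mx scaler0 subr0. Qed.

Lemma inv_lemma (C : numClosedFieldType) (n k p : nat) (e : 'I_k -> 'M[C]_n)
  (pi : bool) (c : {set 'I_k} -> C) :
  anticommuting e ->
  \sum_(A : {set 'I_k} | (#|A| <= p)%N && (odd #|A| == pi)) c A *: Gm e set0 (enum A) = 0 ->
  forall B : {set 'I_k}, exists w : {set 'I_k} -> C, (forall A, w A != 0) /\
   \sum_(A : {set 'I_k} | ((#|A| <= p)%N && (odd #|A| == pi)) && (B \subset A))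
       (c A * w A) *: Gm e B (enum A) = 0.
Proof.
move=> hae H0.
suff H : forall m (B : {set 'I_k}), #|B| = m -> exists w : {set 'I_k} -> C, (forall A, w A != 0) /\
   \sum_(A : {set 'I_k} | ((#|A| <= p)%N && (odd #|A| == pi)) && (B \subset A))
       (c A * w A) *: Gm e B (enum A) = 0.
  by move=> B; exact: (H _ B erefl).
elim=> [|m IH] B cB.
  move/cards0_eq: cB => ->; exists (fun _ => 1); split => [A|]; first exact: oner_neq0.
  rewrite -[RHS]H0; apply: eq_big => A; first by rewrite sub0set andbT.
  by rewrite mulr1.
have /card_gt0P [i iB] : (0 < #|B|)%N by rewrite cB.
set B' := B :\ i.
have cB' : #|B'| = m by move: cB; rewrite (cardsD1 i B) iB add1n => -[].
have iB' : i \notin B' by rewrite /B' setD11.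
have [w [hw hs]] := IH B' cB'.
have := congr1 (Dop e i (pi (+) odd #|B'|)) hs; rewrite Dop0 Dop_lin => hD.
pose w' A := w A * (2 * (-1) ^+ cnt B' (take (index i (enum A)) (enum A))).
exists w'; split => [A|].
  rewrite /w' mulf_neq0 // mulf_neq0 ?signr_eq0 // pnatr_eq0 //.
rewrite -(setD1K iB) -/B'; apply: etrans hD.
rewrite [LHS]big_mkcond [RHS]big_mkcond; apply: eq_bigr => A _.
rewrite subUset sub1set.
case Ap: ((#|A| <= p)%N && (odd #|A| == pi)) => //=.
case BA: (B' \subset A); last by rewrite andbF.
rewrite andbT; move/andP: Ap => [Ap /eqP Api].
have -> : pi (+) odd #|B'| = odd (cnt B' (enum A)).
  by rewrite cnt_enum // oddB ?subset_leq_card // Api.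
case: ifP => iA.
  by rewrite D_in ?enum_uniq ?mem_enum // scalerA /w' mulrA.
by rewrite D_notin ?mem_enum ?iA // scaler0.
Qed.

Lemma Gm0 (C : numClosedFieldType) (n k : nat) (e : 'I_k -> 'M[C]_n) (l : seq 'I_k) :
  Gm e set0 l = foldr (fun i M => e i *m M) 1%:M l.
Proof. by elim: l => //= j l ->; rewrite in_set0. Qed.

Lemma GmA (C : numClosedFieldType) (n k : nat) (e : 'I_k -> 'M[C]_n) (A : {set 'I_k}) :
  Gm e A (enum A) = sqprod e A.
Proof.
rewrite /sqprod; have : {subset enum A <= A} by move=> j; rewrite mem_enum.
elim: (enum A) => //= j l IH H; rewrite H ?mem_head // IH // => x xl.
by apply: H; rewrite in_cons xl orbT.
Qed.

Lemma core (C : numClosedFieldType) (n k p : nat) (e : 'I_k -> 'M[C]_n)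
  (pi : bool) (c : {set 'I_k} -> C) :
  anticommuting e ->
  (forall A : {set 'I_k}, (#|A| <= p)%N -> sqprod e A != 0) ->
  \sum_(A : {set 'I_k} | (#|A| <= p)%N && (odd #|A| == pi)) c A *: eA e A = 0 ->
  forall A : {set 'I_k}, (#|A| <= p)%N && (odd #|A| == pi) -> c A = 0.
Proof.
move=> hae hsq H.
have H0 : \sum_(A : {set 'I_k} | (#|A| <= p)%N && (odd #|A| == pi))
            c A *: Gm e set0 (enum A) = 0.
  by rewrite -[RHS]H; apply: eq_bigr => A _; rewrite Gm0.
suff S : forall m (A : {set 'I_k}), (#|A| <= p)%N && (odd #|A| == pi) ->
           (p - #|A| < m)%N -> c A = 0.
  by move=> A PA; apply: (S (p - #|A|).+1).
elim=> [//|m IH] A PA lt.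
have [w [hw hs]] := inv_lemma hae H0 A.
rewrite (bigD1 A) /= in hs; last by rewrite PA subxx.
rewrite big1 ?addr0 in hs; last first.
  move=> A' /andP[/andP[PA' AA'] A'A].
  have prA : A \proper A' by rewrite properEneq eq_sym A'A.
  have ltA := proper_card prA; have lp := (andP PA').1.
  rewrite (IH A') ?mul0r ?scale0r //; move: lt ltA lp; move: (#|A|) (#|A'|) => a b; clear; lia.
move/eqP: hs; rewrite GmA scaler_eq0 (negPf (hsq A (andP PA).1)) orbF mulf_eq0.
by rewrite (negPf (hw A)) orbF => /eqP.
Qed.

Lemma free_conv (C : numClosedFieldType) (n k : nat) (f : {set 'I_k} -> 'M[C]_n)
  (Q : {pred {set 'I_k}}) :
  (forall c : {set 'I_k} -> C, \sum_(A in Q) c A *: f A = 0 -> forall A, A \in Q -> c A = 0) ->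
  free [seq f A | A <- enum Q].
Proof.
move=> H; set l := enum Q; set s := map f l.
have ul : uniq l := enum_uniq _.
have szs : size s = size l := size_map _ _.
rewrite -[s]/(tval (in_tuple s)); apply/freeP => kk Hk i.
pose cc A := oapp kk 0 (insub (index A l)).
have ccl : forall j : 'I_(size s), cc (nth set0 l j) = kk j.
  move=> j; rewrite /cc index_uniq //; last by rewrite -szs ltn_ord.
  by rewrite valK.
have Hc : \sum_(A in Q) cc A *: f A = 0.
  rewrite -big_enum /= -/l (big_nth set0) -szs big_mkord -[RHS]Hk.
  apply: eq_bigr => j _; rewrite ccl /= (nth_map set0) //; by rewrite -szs ltn_ord.
rewrite -ccl; apply: (H _ Hc).
by rewrite -mem_enum -/l mem_nth // -szs ltn_ord.
Qed.

Theorem lemma4p2 (C : numClosedFieldType) (n k p : nat)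
  (e : 'I_k -> 'M[C]_n) :
  anticommuting e ->
  (p <= k)%N ->
  (forall A : {set 'I_k}, (#|A| <= p)%N -> sqprod e A != 0) ->
  free [seq eA e A | A <- enum [pred A : {set 'I_k} | (#|A| <= p)%N && ~~ odd #|A|]]
  /\
  free [seq eA e A | A <- enum [pred A : {set 'I_k} | (#|A| <= p)%N && odd #|A|]].
Proof.
move=> hae _ hsq; split; apply: free_conv => c Hc A QA.
- apply: (core (pi := false) hae hsq) => //; last by rewrite eqbF_neg.
  by rewrite -[RHS]Hc; apply: eq_bigl => B; rewrite eqbF_neg.
- apply: (core (pi := true) hae hsq) => //; last by rewrite eqb_id.
  by rewrite -[RHS]Hc; apply: eq_bigl => B; rewrite eqb_id.
Qed.
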